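(* For every integer $n\geq 2$, the graph $\mathcal{G}^3_n$ is transmission irregular, and its set of vertex transmissions equals $\{n^2+5n+10,\, n^2+5n+11,\,\dots,\, n^2+7n+16\}\cup\{n^2+8n+15\}$.
   Context: Let $G_3$ be the (disconnected) graph with vertices $a,b,c,d,e,f,g,h$ and edges $ab,ac,bc,de,dg,ef,eh,gh$. For an integer $n\ge1$, $\mathcal{G}^3_n$ is obtained from $G_3$ by adding a new path from $b$ to $d$ with $n$ new internal vertices and a new path from $c$ to $e$ with $n$ new internal vertices (each such path has length $n+1$). The transmission of a vertex $u$ in a connected graph $G$ is $Tr_G(u)=\sum_{v}d_G(u,v)$; a graph is transmission irregular if no two of its vertices have equal transmission. *)

(* Defs.v *)
From mathcomp Require Import all_boot.
Set Implicit Arguments. Unset Strict Implicit. Unset Printing Implicit Defensive.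

Definition walk_of_len (T : finType) (e : rel T) (k : nat) (u v : T) : bool :=
  [exists p : k.-tuple T, path e u p && (last u p == v)].

(* Distance = length of a shortest walk (equivalently shortest path).
   For a connected graph on T every distance is < #|T|, so searching
   k in [0, #|T|) is exact; [find] returns the least such k. *)
Definition gdist (T : finType) (e : rel T) (u v : T) : nat :=
  find (fun k => walk_of_len e k u v) (iota 0 #|T|).

Definition transmission (T : finType) (e : rel T) (u : T) : nat :=
  \sum_(v : T) gdist e u v.

Definition connected_graph (T : finType) (e : rel T) : Prop :=
  forall u v : T, connect e u v.

Definition transmission_irregular (T : finType) (e : rel T) : Prop :=
  injective (transmission e).

(* Vertices are 'I_(2n+8):
     0..7  = a,b,c,d,e,f,g,h
     8 .. n+7      = internal vertices of the b–d path (8 adjacent to b,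
                     n+7 adjacent to d)
     n+8 .. 2n+7   = internal vertices of the c–e path (n+8 adjacent to c,
                     2n+7 adjacent to e). *)

Definition G3_base_edges : seq (nat * nat) :=
  [:: (0,1); (0,2); (1,2); (3,4); (3,6); (4,5); (4,7); (6,7)].

Definition G3n_dir_edge (n x y : nat) : bool :=
  [|| (x, y) \in G3_base_edges,
      (x == 1) && (y == 8),
      (x == n + 7) && (y == 3),
      (x == 2) && (y == n + 8),
      (x == 2 * n + 7) && (y == 4),
      [&& 8 <= x, y == x.+1 & y < n + 8]
    | [&& n + 8 <= x, y == x.+1 & y < 2 * n + 8]].

Definition G3n_vertex (n : nat) := 'I_(2 * n + 8).

Definition G3n_adj (n : nat) : rel (G3n_vertex n) :=
  fun x y => G3n_dir_edge n x y || G3n_dir_edge n y x.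
Arguments G3n_adj n : clear implicits.

(* Main.v *)
Require Import Defs.
From mathcomp Require Import all_boot zify.
Set Implicit Arguments. Unset Strict Implicit.


Definition ad (p q : nat) := (p - q) + (q - p).
Definition cd (n p q : nat) := minn (ad p q) (2*n+4 - ad p q).

Inductive kd := Cyc of nat | KA | KF | KG | KH.

Definition valid n (k : kd) := if k is Cyc p then p < 2*n+4 else true.

Definition cpos n x := if x == 1 then 0 else if x == 2 then 2*n+3 else
  if x == 3 then n+1 else if x == 4 then n+2 else if x < n+8 then x-7 else 3*n+10-x.
Definition kind n x := if x == 0 then KA else if x == 5 then KF else
  if x == 6 then KG else if x == 7 then KH else Cyc (cpos n x).
Definition vert n k := match k with KA => 0 | KF => 5 | KG => 6 | KH => 7
  | Cyc q => if q == 0 then 1 else if q == 2*n+3 then 2 else if q == n+1 then 3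
     else if q == n+2 then 4 else if q <= n then q+7 else 3*n+10-q end.

Definition kadj n (u v : kd) : bool :=
  match u, v with
  | Cyc p, Cyc q => [|| q == p.+1, p == q.+1, (p == 0) && (q == 2*n+3) | (q == 0) && (p == 2*n+3)]
  | KA, Cyc q | Cyc q, KA => (q == 0) || (q == 2*n+3)
  | KF, Cyc q | Cyc q, KF => q == n+2
  | KH, Cyc q | Cyc q, KH => q == n+2
  | KG, Cyc q | Cyc q, KG => q == n+1
  | KG, KH | KH, KG => true
  | _, _ => false end.

Ltac iflia := repeat (case: ifP => ? /=); try lia.

Lemma kind_valid n x : x < 2*n+8 -> valid n (kind n x).
Proof. move=> hx; rewrite /kind /cpos; iflia. Qed.

Lemma vert_kind n x : x < 2*n+8 -> vert n (kind n x) = x.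
Proof. move=> hx; rewrite /kind /cpos; repeat (case: ifP => ?); rewrite /=; iflia. Qed.

Lemma kind_vert n k : valid n k -> kind n (vert n k) = k /\ vert n k < 2*n+8.
Proof.
case: k => [q||||] //= hq; split; try lia; try by [].
  rewrite /vert; repeat (case: ifP => ?); rewrite /kind /cpos; iflia; try (congr Cyc; lia).
rewrite /vert; iflia.
Qed.

Lemma kadj_sym n u v : kadj n u v = kadj n v u.
Proof. case: u => [p||||]; case: v => [q||||] //=; apply/idP/idP; lia. Qed.

Lemma adj_kind n x y : 0 < n -> x < 2*n+8 -> y < 2*n+8 -> G3n_dir_edge n x y ->
  kadj n (kind n x) (kind n y).
Proof.
move=> hn hx hy; rewrite /G3n_dir_edge /G3_base_edges !in_cons !xpair_eqE in_nil /=.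
repeat (case/orP; first by move=> H; rewrite /kind /cpos; repeat (case: ifP => ?); rewrite /=; lia).
by move=> H; rewrite /kind /cpos; repeat (case: ifP => ?); rewrite /=; lia.
Qed.

Lemma kind_spec n x : 0 < n -> x < 2*n+8 ->
  (x = 0 /\ kind n x = KA) \/ (x = 5 /\ kind n x = KF) \/ (x = 6 /\ kind n x = KG) \/
  (x = 7 /\ kind n x = KH) \/ (x = 1 /\ kind n x = Cyc 0) \/ (x = 2 /\ kind n x = Cyc (2*n+3)) \/
  (x = 3 /\ kind n x = Cyc (n+1)) \/ (x = 4 /\ kind n x = Cyc (n+2)) \/
  (8 <= x < n + 8 /\ kind n x = Cyc (x - 7)) \/ (n + 8 <= x /\ kind n x = Cyc (3*n+10-x)).
Proof.
move=> hn hx; rewrite /kind /cpos.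
case: ifP => [/eqP ->|?]; first by left.
case: ifP => [/eqP ->|?]; first by do 1 right; left.
case: ifP => [/eqP ->|?]; first by do 2 right; left.
case: ifP => [/eqP ->|?]; first by do 3 right; left.
case: ifP => [/eqP ->|?]; first by do 4 right; left.
case: ifP => [/eqP ->|?]; first by do 5 right; left.
case: ifP => [/eqP ->|?]; first by do 6 right; left.
case: ifP => [/eqP ->|?]; first by do 7 right; left.
case: ifP => ?; first by do 8 right; left; split => //; lia.
by do 9 right; split => //; lia.
Qed.



Lemma eb n x y : (x, y) \in G3_base_edges -> G3n_dir_edge n x y.
Proof. by rewrite /G3n_dir_edge => ->. Qed.
Lemma e1 n x y : x = 1 -> y = 8 -> G3n_dir_edge n x y.
Proof. move=> -> ->; rewrite /G3n_dir_edge; apply/orP; right; apply/orP; left; by []. Qed.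
Lemma e2 n x y : x = n+7 -> y = 3 -> G3n_dir_edge n x y.
Proof. move=> -> ->; rewrite /G3n_dir_edge; apply/orP; right; apply/orP; right; apply/orP; left; lia. Qed.
Lemma e3 n x y : x = 2 -> y = n+8 -> G3n_dir_edge n x y.
Proof. move=> -> ->; rewrite /G3n_dir_edge; do 3 (apply/orP; right); apply/orP; left; lia. Qed.
Lemma e4 n x y : x = 2*n+7 -> y = 4 -> G3n_dir_edge n x y.
Proof. move=> -> ->; rewrite /G3n_dir_edge; do 4 (apply/orP; right); apply/orP; left; lia. Qed.
Lemma e5 n x y : 8 <= x -> y = x.+1 -> y < n+8 -> G3n_dir_edge n x y.
Proof. move=> ? -> ?; rewrite /G3n_dir_edge; do 5 (apply/orP; right); apply/orP; left; lia. Qed.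
Lemma e6 n x y : n+8 <= x -> y = x.+1 -> y < 2*n+8 -> G3n_dir_edge n x y.
Proof. move=> ? -> ?; rewrite /G3n_dir_edge; do 6 (apply/orP; right); lia. Qed.

Ltac solve1 := first [ by apply: eb | apply: e1; lia | apply: e2; lia | apply: e3; lia
  | apply: e4; lia | apply: e5; lia | apply: e6; lia ].
Ltac solve_edge := first [ done | apply/orP; left; solve1 | apply/orP; right; solve1 | exfalso; lia ].

Lemma adj_of_kadj n x y : 0 < n -> x < 2*n+8 -> y < 2*n+8 -> kadj n (kind n x) (kind n y) ->
  G3n_dir_edge n x y || G3n_dir_edge n y x.
Proof.
move=> hn hx hy.
have := @kind_spec n x hn hx; have := @kind_spec n y hn hy.
case=> [[-> ->]|[[-> ->]|[[-> ->]|[[-> ->]|[[-> ->]|[[-> ->]|[[-> ->]|[[-> ->]|[[? ->]|[? ->]]]]]]]]]];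
case=> [[-> ->]|[[-> ->]|[[-> ->]|[[-> ->]|[[-> ->]|[[-> ->]|[[-> ->]|[[-> ->]|[[? ->]|[? ->]]]]]]]]]];
rewrite /= => H; repeat (case/orP: H => H); solve_edge.

Qed.


Definition offd n (k : kd) (q : nat) : nat :=
  match k with
  | KA => (minn (cd n 0 q) (cd n (2*n+3) q)).+1
  | KF | KH => (cd n (n+2) q).+1
  | KG => (cd n (n+1) q).+1
  | Cyc p => cd n p q end.

Definition KD n (u v : kd) : nat :=
  match u, v with
  | Cyc p, Cyc q => cd n p q
  | Cyc p, k => offd n k p
  | k, Cyc q => offd n k q
  | KA, KA | KF, KF | KG, KG | KH, KH => 0
  | KA, _ | _, KA => n+3
  | KF, KG | KG, KF => 3
  | KF, KH | KH, KF => 2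
  | _, _ => 1
  end.

Lemma oA n q : q < 2*n+4 -> offd n KA q = (minn q (2*n+3-q)).+1.
Proof. rewrite /offd /cd /ad; lia. Qed.
Lemma oF n q : q < 2*n+4 -> offd n KF q = (ad (n+2) q).+1.
Proof. rewrite /offd /cd /ad; lia. Qed.
Lemma oH n q : q < 2*n+4 -> offd n KH q = (ad (n+2) q).+1.
Proof. rewrite /offd /cd /ad; lia. Qed.
Lemma oG n q : q < 2*n+4 -> offd n KG q = (ad (n+1) q).+1.
Proof. rewrite /offd /cd /ad; lia. Qed.
Lemma oC n p q : offd n (Cyc p) q = cd n p q.
Proof. by []. Qed.

Arguments offd : simpl never.
Arguments cd : simpl never.

Ltac orw := rewrite ?oC ?oA ?oF ?oG ?oH; try rewrite /cd; try rewrite /ad; try lia.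

Lemma lip n u a b : 0 < n -> valid n u -> valid n a -> valid n b -> kadj n a b ->
  KD n u b <= (KD n u a).+1.
Proof.
move=> hn; case: u => [p||||]; case: a => [q||||]; case: b => [r||||] //= => hu ha hb H; orw.
Qed.

Lemma KDuu n u : KD n u u = 0.
Proof. case: u => [p||||] //=; rewrite /cd /ad; lia. Qed.

Lemma KD0 n u v : valid n u -> valid n v -> KD n u v = 0 -> u = v.
Proof.
case: u => [p||||]; case: v => [q||||] //= => hu hv; orw.
move=> h; congr Cyc; lia.
Qed.

Lemma KDlt n u v : valid n u -> valid n v -> KD n u v < 2*n+8.
Proof. case: u => [p||||]; case: v => [q||||] //= => hu hv; orw. Qed.



Lemma desc n u v : 0 < n -> valid n u -> valid n v -> u <> v ->
  exists w, [/\ valid n w, kadj n v w & (KD n u w).+1 = KD n u v].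
Proof.
move=> hn hu hv huv.
case: v hv huv => [q||||] /= hv huv.
- case: u hu huv => [p||||] /= hu huv.
  + have hpq : p <> q by move=> e; apply: huv; rewrite e.
    case: (ltngtP p q) => h; last by [].
    * case: (leqP (q-p) (n+2)) => h2.
        by exists (Cyc q.-1) => /=; split; orw.
      case: (ltnP q (2*n+3)) => h3.
        by exists (Cyc q.+1) => /=; split; orw.
      by exists (Cyc 0) => /=; split; orw.
    * case: (leqP (p-q) (n+2)) => h2.
        by exists (Cyc q.+1) => /=; split; orw.
      case: (ltnP 0 q) => h3.
        by exists (Cyc q.-1) => /=; split; orw.
      by exists (Cyc (2*n+3)) => /=; split; orw.
  + case: (boolP ((q == 0) || (q == 2*n+3))) => h0.
      by exists KA; split => //; rewrite /=; orw.
    case: (leqP q (n+1)) => h1.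
      by exists (Cyc q.-1); split => //=; orw.
    by exists (Cyc q.+1); split => //=; orw.
  + case: (boolP (q == n+2)) => h0.
      by exists KF; split => //; rewrite /=; orw.
    case: (ltnP q (n+2)) => h1.
      by exists (Cyc q.+1); split => //=; orw.
    by exists (Cyc q.-1); split => //=; orw.
  + case: (boolP (q == n+1)) => h0.
      by exists KG; split => //; rewrite /=; orw.
    case: (ltnP q (n+1)) => h1.
      by exists (Cyc q.+1); split => //=; orw.
    by exists (Cyc q.-1); split => //=; orw.
  + case: (boolP (q == n+2)) => h0.
      by exists KH; split => //; rewrite /=; orw.
    case: (ltnP q (n+2)) => h1.
      by exists (Cyc q.+1); split => //=; orw.
    by exists (Cyc q.-1); split => //=; orw.
- have: (KD n u (Cyc 0)).+1 = KD n u KA \/ (KD n u (Cyc (2*n+3))).+1 = KD n u KA.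
    by case: u hu huv => [p||||] /= hu huv; [orw| by [] |orw|orw|orw].
  case=> h; [exists (Cyc 0) | exists (Cyc (2*n+3))]; split => //=; lia.
- have: (KD n u (Cyc (n+2))).+1 = KD n u KF.
    by case: u hu huv => [p||||] /= hu huv; [orw|orw| by [] |orw|orw].
  by move=> h; exists (Cyc (n+2)); split => //=; lia.
- have: (KD n u (Cyc (n+1))).+1 = KD n u KG \/ (KD n u KH).+1 = KD n u KG.
    by case: u hu huv => [p||||] /= hu huv; [orw|orw|orw| by [] |orw].
  case=> h; [exists (Cyc (n+1)) | exists KH]; split => //=; lia.
- have: (KD n u (Cyc (n+2))).+1 = KD n u KH \/ (KD n u KG).+1 = KD n u KH.
    by case: u hu huv => [p||||] /= hu huv; [orw|orw|orw|orw| by []].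
  case=> h; [exists (Cyc (n+2)) | exists KG]; split => //=; lia.
Qed.


Lemma adjK n (x y : G3n_vertex n) : 0 < n -> G3n_adj n x y -> kadj n (kind n x) (kind n y).
Proof.
move=> hn; rewrite /G3n_adj => /orP[h|h].
  exact: adj_kind (ltn_ord x) (ltn_ord y) h.
by rewrite kadj_sym; exact: adj_kind (ltn_ord y) (ltn_ord x) h.
Qed.

Lemma walk_lb n (u : kd) (p : seq (G3n_vertex n)) (x : G3n_vertex n) : 0 < n -> valid n u ->
  path (G3n_adj n) x p -> KD n u (kind n (last x p)) <= KD n u (kind n x) + size p.
Proof.
move=> hn hu; elim: p x => [|y p IH] x /=; first by rewrite addn0.
case/andP=> hxy hp.
have h1 := IH y hp.
have h2 := lip hn hu (kind_valid (ltn_ord x)) (kind_valid (ltn_ord y)) (adjK hn hxy).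
lia.
Qed.

Lemma find_iota (P : pred nat) d N : P d -> (forall k, k < d -> ~~ P k) -> d < N ->
  find P (iota 0 N) = d.
Proof.
move=> hd hlt hN.
rewrite -(subnKC (ltnW hN)) iotaD find_cat.
have -> : has P (iota 0 d) = false.
  apply/negbTE/hasPn => k; rewrite mem_iota add0n => /andP[_ hk]; exact: hlt.
rewrite size_iota add0n.
case e: (N - d) => [|m]; first by lia.
by rewrite /= hd addn0.
Qed.

Lemma walk_ub n (u0 : G3n_vertex n) : 0 < n -> forall k (v : G3n_vertex n),
  KD n (kind n u0) (kind n v) = k -> walk_of_len (G3n_adj n) k u0 v.
Proof.
move=> hn; elim=> [|k IH] v hk.
  have := KD0 (kind_valid (ltn_ord u0)) (kind_valid (ltn_ord v)) hk => e.
  have : (u0 : nat) = v by rewrite -(vert_kind (ltn_ord u0)) e (vert_kind (ltn_ord v)).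
  move/ord_inj => <-.
  apply/existsP; exists [tuple] => /=; by [].
have hne : kind n u0 <> kind n v by move=> e; rewrite e KDuu in hk.
have [w [hw hadj hkw]] := desc hn (kind_valid (ltn_ord u0)) (kind_valid (ltn_ord v)) hne.
have [kw hwN] := kind_vert hw.
pose wv : G3n_vertex n := Ordinal hwN.
have hkw' : kind n wv = w by [].
have := IH wv; rewrite hkw' => /(_ ltac:(lia)) /existsP [p /andP [hp /eqP hl]].
apply/existsP; exists [tuple of rcons p v].
rewrite /= rcons_path last_rcons eqxx hp andbT hl /G3n_adj.
apply: (adj_of_kadj hn (ltn_ord wv) (ltn_ord v)).
by rewrite hkw' kadj_sym.
Qed.

Lemma gdistE n (u v : G3n_vertex n) : 0 < n ->
  gdist (G3n_adj n) u v = KD n (kind n u) (kind n v).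
Proof.
move=> hn; rewrite /gdist card_ord.
apply: find_iota.
- exact: walk_ub.
- move=> k hk; apply/negP => /existsP [p /andP [hp /eqP hl]].
  have := walk_lb hn (kind_valid (ltn_ord u)) hp; rewrite hl KDuu size_tuple. lia.
- exact: KDlt (kind_valid (ltn_ord u)) (kind_valid (ltn_ord v)).
Qed.


Lemma shift_sum a b (F : nat -> nat) :
  \sum_(a <= i < a + b) F i = \sum_(0 <= j < b) F (a + j).
Proof.
elim: b => [|b IH]; first by rewrite addn0 !big_geq.
rewrite addnS !big_nat_recr //=; last by rewrite leq_addr.
by rewrite IH.
Qed.

Lemma split_sum m (F : nat -> nat) :
  \sum_(0 <= q < m + m) F q = \sum_(0 <= j < m) (F j + F (m + j)).
Proof.
rewrite (big_cat_nat (n := m)) //=; last by rewrite leq_addr.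
by rewrite shift_sum big_split.
Qed.

Lemma sum_const_m m (F : nat -> nat) c :
  (forall j, j < m -> F j + F (m + j) = c) -> \sum_(0 <= q < m + m) F q = m * c.
Proof.
move=> h; rewrite split_sum (eq_big_nat _ _ (F2 := fun _ => c)).
  by rewrite sum_nat_const_nat subn0.
by move=> j /andP [_ hj]; apply: h.
Qed.

Lemma S0 n : \sum_(0 <= q < 2*n+4) cd n 0 q = (n+2)*(n+2).
Proof.
have -> : 2*n+4 = (n+2)+(n+2) by lia.
apply: sum_const_m => j hj; rewrite /cd /ad; lia.
Qed.

Lemma S_rot n p : p < 2*n+4 ->
  \sum_(q < 2*n+4) cd n p q = \sum_(q < 2*n+4) cd n 0 q.
Proof.
move=> hp.
have hlt : forall q : 'I_(2*n+4), (if q + p < 2*n+4 then q+p else q+p-(2*n+4)) < 2*n+4.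
  by move=> q; have := ltn_ord q; case: ifP; lia.
have hinj : injective (fun q => Ordinal (hlt q)).
  move=> a b /(congr1 val) /=; have := ltn_ord a; have := ltn_ord b.
  by case: ifP; case: ifP => ? ? ? ? e; apply/ord_inj; lia.
rewrite (reindex_inj hinj); apply: eq_bigr => q _ /=.
have := ltn_ord q; rewrite /cd /ad; case: ifP; lia.
Qed.

Lemma S_cd n p : p < 2*n+4 -> \sum_(q < 2*n+4) cd n p q = (n+2)*(n+2).
Proof. by move=> hp; rewrite S_rot // -S0 big_mkord. Qed.


Lemma kP1 n j : j < n -> kind n (8+j) = Cyc j.+1.
Proof. move=> hj; rewrite /kind /cpos; repeat (case: ifP => ?); try lia; congr Cyc; lia. Qed.
Lemma kP2 n j : j < n -> kind n (8+n+j) = Cyc (2*n+2-j).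
Proof. move=> hj; rewrite /kind /cpos; repeat (case: ifP => ?); try lia; congr Cyc; lia. Qed.

Lemma cyc_split n (H : nat -> nat) : \sum_(0 <= q < 2*n+4) H q =
  H 0 + H (2*n+3) + H (n+1) + H (n+2) + \sum_(0 <= j < n) H j.+1 + \sum_(0 <= j < n) H (2*n+2-j).
Proof.
have -> : 2*n+4 = (n+3+n).+1 by lia.
rewrite big_nat_recr //= (big_cat_nat (n := n+3)) //=; last by lia.
rewrite shift_sum.
have -> : n + 3 = (n+1).+1.+1 by lia.
rewrite big_nat_recr //= big_nat_recr //=.
have E : \sum_(0 <= j < n) H ((n + 1).+2 + j) = \sum_(0 <= j < n) H (2*n+2-j).
  rewrite big_nat_rev /= add0n; apply: eq_big_nat => i /andP[_ hi]; congr H; lia.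
rewrite E addn1 big_nat_recl //.
have -> : n.+2.+1 + n = 2*n+3 by lia.
have -> : n.+2 = n+2 by lia.
have -> : n.+1 = n+1 by lia.
lia.
Qed.

Lemma vert_split n (F : nat -> nat) : \sum_(0 <= x < 2*n+8) F x =
  F 0 + F 1 + F 2 + F 3 + F 4 + F 5 + F 6 + F 7 +
  \sum_(0 <= j < n) F (8+j) + \sum_(0 <= j < n) F (8+n+j).
Proof.
have h8 : \sum_(0 <= i < 8) F i = F 0 + F 1 + F 2 + F 3 + F 4 + F 5 + F 6 + F 7.
  Time rewrite !big_nat_recl // big_geq //=. Time lia.
have -> : 2*n+8 = 8 + n + n by lia.
rewrite (big_cat_nat (n:=8)); [| by [] | by rewrite -addnA leq_addr].
rewrite (big_cat_nat (n:=8+n) (m:=8)); [| by rewrite leq_addr | by rewrite leq_addr].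
rewrite (shift_sum 8 n) (shift_sum (8+n) n) h8.
rewrite /=; lia.
Qed.

Lemma trans_sum n (u : G3n_vertex n) : 0 < n ->
  transmission (G3n_adj n) u = KD n (kind n u) KA + KD n (kind n u) KF + KD n (kind n u) KG
    + KD n (kind n u) KH + \sum_(q < 2*n+4) KD n (kind n u) (Cyc q).
Proof.
move=> hn; rewrite /transmission.
under eq_bigr do rewrite gdistE //.
rewrite -(big_mkord xpredT (fun x => KD n (kind n u) (kind n x))) vert_split.
rewrite -(big_mkord xpredT (fun q => KD n (kind n u) (Cyc q))) cyc_split.
have -> : \sum_(0 <= j < n) KD n (kind n u) (kind n (8+j)) = \sum_(0 <= j < n) KD n (kind n u) (Cyc j.+1).
  by apply: eq_big_nat => j /andP[_ hj]; rewrite kP1.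
have -> : \sum_(0 <= j < n) KD n (kind n u) (kind n (8+n+j)) = \sum_(0 <= j < n) KD n (kind n u) (Cyc (2*n+2-j)).
  by apply: eq_big_nat => j /andP[_ hj]; rewrite kP2.
have -> : kind n 0 = KA by [].
have -> : kind n 1 = Cyc 0 by [].
have -> : kind n 2 = Cyc (2*n+3) by [].
have -> : kind n 3 = Cyc (n+1) by [].
have -> : kind n 4 = Cyc (n+2) by [].
have -> : kind n 5 = KF by [].
have -> : kind n 6 = KG by [].
have -> : kind n 7 = KH by [].
lia.
Qed.


Definition toff n k := match k with
  | Cyc p => if p <= n+1 then 3*n+9-2*p else 2*p - n + 2
  | KA => 4*n+11 | KF => 3*n+12 | KG => 3*n+11 | KH => 3*n+10 end.

Lemma sumA n : \sum_(q < 2*n+4) KD n KA (Cyc q) = (n+2)*(n+2) + (n+2).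
Proof.
rewrite (eq_bigr (fun q : 'I_(2*n+4) => (minn q (2*n+3-q)).+1)); last first.
  by move=> q _; rewrite /= oA.
rewrite -(big_mkord xpredT (fun q => (minn q (2*n+3-q)).+1)).
have -> : 2*n+4 = (n+2)+(n+2) by lia.
rewrite (@sum_const_m (n+2) _ (n+3)); first by nia.
move=> j hj; lia.
Qed.

Lemma sumF n : \sum_(q < 2*n+4) KD n KF (Cyc q) = (n+2)*(n+2) + (2*n+4).
Proof.
rewrite (eq_bigr (fun q : 'I_(2*n+4) => (ad (n+2) q).+1)); last first.
  by move=> q _; rewrite /= oF.
rewrite -(big_mkord xpredT (fun q => (ad (n+2) q).+1)).
have -> : 2*n+4 = (n+2)+(n+2) by lia.
rewrite (@sum_const_m (n+2) _ (n+4)); first by nia.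
move=> j hj; rewrite /ad; lia.
Qed.

Lemma sumH n : \sum_(q < 2*n+4) KD n KH (Cyc q) = (n+2)*(n+2) + (2*n+4).
Proof.
rewrite (eq_bigr (fun q : 'I_(2*n+4) => (ad (n+2) q).+1)); last first.
  by move=> q _; rewrite /= oH.
rewrite -(big_mkord xpredT (fun q => (ad (n+2) q).+1)).
have -> : 2*n+4 = (n+2)+(n+2) by lia.
rewrite (@sum_const_m (n+2) _ (n+4)); first by nia.
move=> j hj; rewrite /ad; lia.
Qed.

Lemma sumG n : \sum_(q < 2*n+4) KD n KG (Cyc q) = (n+2)*(n+2) + (2*n+4).
Proof.
rewrite (eq_bigr (fun q : 'I_(2*n+4) => (ad (n+1) q).+1)); last first.
  by move=> q _; rewrite /= oG.
rewrite -(big_mkord xpredT (fun q => (ad (n+1) q).+1)).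
have -> : 2*n+4 = (n+2)+(n+2) by lia.
rewrite (@sum_const_m (n+2) _ (n+4)); first by nia.
move=> j hj; rewrite /ad; lia.
Qed.

Lemma sumC n p : p < 2*n+4 -> \sum_(q < 2*n+4) KD n (Cyc p) (Cyc q) = (n+2)*(n+2).
Proof. by move=> hp; rewrite -(S_cd hp). Qed.


Lemma trK n (u : G3n_vertex n) : 0 < n ->
  transmission (G3n_adj n) u = (n+2)*(n+2) + toff n (kind n u).
Proof.
move=> hn; rewrite trans_sum //.
have := kind_valid (ltn_ord u).
case: (kind n u) => [p||||] /= hv.
- rewrite sumC //; case: ifP => h; orw.
- by rewrite sumA; lia.
- by rewrite sumF; lia.
- by rewrite sumG; lia.
- by rewrite sumH; lia.
Qed.

Lemma toff_inj n a b : 1 < n -> valid n a -> valid n b -> toff n a = toff n b -> a = b.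
Proof.
move=> hn; case: a => [p||||]; case: b => [q||||] //= ha hb; repeat case: ifP => ?; try lia.
all: move=> h; first [congr Cyc; lia | exfalso; lia].
Qed.

Lemma toff_range n a : valid n a -> (n+6 <= toff n a <= 3*n+12) \/ toff n a = 4*n+11.
Proof. case: a => [p||||] //= ha; try lia; case: ifP => ?; lia. Qed.

Lemma toff_surj n t : (n+6 <= t <= 3*n+12) \/ t = 4*n+11 -> exists a, valid n a /\ toff n a = t.
Proof.
move=> ht.
case: (boolP (t == 4*n+11)) => [/eqP e|h1]; first by exists KA.
case: (boolP (t == 3*n+12)) => [/eqP e|h2]; first by exists KF.
case: (boolP (t == 3*n+11)) => [/eqP e|h3]; first by exists KG.
case: (boolP (t == 3*n+10)) => [/eqP e|h4]; first by exists KH.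
have hd := divn_eq (t - (n+6)) 2; have hm := ltn_pmod (t - (n+6)) (isT : 0 < 2).
move: hd hm; move: ((t - (n+6)) %/ 2) => r; move: ((t - (n+6)) %% 2) => b.
move=> hd hm.
case: b hd hm => [|[|b]] hd hm; last by lia.
- exists (Cyc (n+2+r)) => /=; split; first lia.
  case: ifP => ?; lia.
- exists (Cyc (n+1-r)) => /=; split; first lia.
  case: ifP => ?; lia.
Qed.

Theorem proposition3 (n : nat) (hn : 2 <= n) :
  transmission_irregular (G3n_adj n) /\
  (forall k : nat,
     (exists v : G3n_vertex n, transmission (G3n_adj n) v = k) <->
     ((n ^ 2 + 5 * n + 10 <= k <= n ^ 2 + 7 * n + 16) \/ k = n ^ 2 + 8 * n + 15)).
Proof.
have hn0 : 0 < n by lia.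
have E : (n+2)*(n+2) = n^2 + 4*n + 4 by rewrite mulnn sqrnD; lia.
split.
  move=> u v; rewrite !trK // => /addnI h.
  have := toff_inj hn (kind_valid (ltn_ord u)) (kind_valid (ltn_ord v)) h => e.
  apply: ord_inj; by rewrite -(vert_kind (ltn_ord u)) e (vert_kind (ltn_ord v)).
move=> k; split.
  case=> v <-; rewrite trK // E.
  have := toff_range (kind_valid (ltn_ord v)).
  move: (n ^ 2) (toff n (kind n v)) => N2 t; lia.
move=> hk.
have [a [ha hta]] := @toff_surj n (k - (n+2)*(n+2)) ltac:(rewrite E; move: (n^2) hk => N2; lia).
have [hka hva] := kind_vert ha.
exists (Ordinal hva); rewrite trK //= hka hta.
move: hk; rewrite E; move: (n^2) => N2; lia.
Qed.
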